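(* Let $m\ge1$ be an integer with $m\equiv r\pmod{12}$, $0\le r\le 11$. If $r\notin\{2,4,6,8,10\}$, then the friendship graph $F_j$ is $\mathbb{Z}_m$-cordial for every $j\in\mathbb{N}$ with $j\le\lfloor m/2\rfloor$. If $m\equiv 2\pmod{12}$, then $F_j$ is $\mathbb{Z}_m$-cordial for every $j\in\mathbb{N}$ with $j\le\lfloor m/2\rfloor-1$.
   Context: Graphs are finite, simple and undirected. For $n\in\mathbb{N}$, the friendship graph $F_n$ is the union of $n$ copies of the triangle $C_3$ joined at a single common (central) vertex. For an abelian group $A$ and a graph $G=(V,E)$, a vertex labeling $\ell:V\to A$ induces an edge labeling $\ell(\{v_1,v_2\})=\ell(v_1)+\ell(v_2)$. Let $f_V(a)=|\{v\in V:\ell(v)=a\}|$ and $f_E(a)=|\{e\in E:\ell(e)=a\}|$. The labeling is $A$-cordial if $|f_V(a_1)-f_V(a_2)|\le 1$ and $|f_E(a_1)-f_E(a_2)|\le 1$ for all $a_1,a_2\in A$; $G$ is $A$-cordial if it admits an $A$-cordial labeling. *)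

(* Defs.v *)
From mathcomp Require Import all_boot.
Set Implicit Arguments. Unset Strict Implicit. Unset Printing Implicit Defensive.

(* A finite simple graph is given by a vertex finType V and the list of its
   edges (each edge listed once as an ordered pair of distinct vertices). *)

(* Friendship graph F_n: vertices 0..2n, central vertex 0, and for each
   k < n the triangle {0, 2k+1, 2k+2}. *)
Definition friendship_edges (n : nat) : seq ('I_(n.*2).+1 * 'I_(n.*2).+1) :=
  flatten [seq [:: (inord 0, inord k.*2.+1); (inord 0, inord k.*2.+2);
                   (inord k.*2.+1, inord k.*2.+2)] | k <- iota 0 n].

(* Z_m (m >= 1) is represented by 'I_m with addition modulo m.
   A vertex labeling l : V -> 'I_m induces the edge label (l u + l v) mod m. *)
Definition fV (m : nat) (V : finType) (l : V -> 'I_m) (a : 'I_m) : nat :=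
  #|[set v | l v == a]|.

Definition fE (m : nat) (V : finType) (E : seq (V * V)) (l : V -> 'I_m)
    (a : 'I_m) : nat :=
  count (fun e => (l e.1 + l e.2) %% m == a) E.

Definition Zm_cordial_labeling (m : nat) (V : finType) (E : seq (V * V))
    (l : V -> 'I_m) : Prop :=
  forall a1 a2 : 'I_m,
    fV l a1 <= fV l a2 + 1 /\ fE E l a1 <= fE E l a2 + 1.

Definition Zm_cordial (m : nat) (V : finType) (E : seq (V * V)) : Prop :=
  exists l : V -> 'I_m, Zm_cordial_labeling E l.

(* Main.v *)
Require Import Defs.
From mathcomp Require Import all_boot.
From mathcomp Require Import zify.
Set Implicit Arguments. Unset Strict Implicit. Unset Printing Implicit Defensive.

Definition cnt (m : nat) (s : seq nat) (a : nat) : nat :=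
  count (fun x => x %% m == a) s.
Definition Bal (m : nat) (s : seq nat) : Prop :=
  forall a1 a2, a1 < m -> a2 < m -> cnt m s a1 <= cnt m s a2 + 1.
Definition VL (j : nat) (f g : nat -> nat) : seq nat :=
  flatten [seq [:: f k; g k] | k <- iota 0 j].
Definition SL (j : nat) (f g : nat -> nat) : seq nat :=
  [seq f k + g k | k <- iota 0 j].
Definition hlab (f g : nat -> nat) (v : nat) : nat :=
  if v == 0 then 0 else if odd v then f v./2 else g v.-1./2.

Lemma VLS j f g : VL j.+1 f g = VL j f g ++ [:: f j; g j].
Proof. by rewrite /VL -addn1 iotaD map_cat flatten_cat /= ?cats0. Qed.

Lemma SLS j f g : SL j.+1 f g = SL j f g ++ [:: f j + g j].
Proof. by rewrite /SL -addn1 iotaD map_cat. Qed.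

Lemma half_odd2 k : (k.*2).+1./2 = k.
Proof. exact: (half_bit_double k true). Qed.

Lemma cnt_vert m j f g a :
  count (fun v => hlab f g v %% m == a) (iota 0 (j.*2).+1) = cnt m (0 :: VL j f g) a.
Proof.
rewrite /= /cnt /=; congr (_ + _).
elim: j => [|j IH] //.
rewrite doubleS VLS -addn2 iotaD !count_cat IH; congr (_ + _).
by rewrite /= /hlab /= odd_double /= add0n uphalf_double.
Qed.

Definition labO (m j : nat) (f g : nat -> nat) (hm : 0 < m) (v : 'I_(j.*2).+1) : 'I_m :=
  Ordinal (ltn_pmod (hlab f g v) hm).

Lemma fV_eq m j f g (hm : 0 < m) (a : 'I_m) :
  fV (@labO m j f g hm) a = cnt m (0 :: VL j f g) a.
Proof.
rewrite /fV cardsE cardE /enum_mem -enumT size_filter -cnt_vert.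
rewrite -val_enum_ord count_map; apply: eq_count => v /=.
by rewrite /labO.
Qed.

Lemma labO_val m j f g (hm : 0 < m) x : x <= j.*2 ->
  (@labO m j f g hm (inord x) : nat) = hlab f g x %% m.
Proof. by move=> hx; rewrite /labO /= inordK. Qed.

Lemma fE_gen m j f g (hm : 0 < m) a (s : seq nat) : all (fun k => k < j) s ->
  count (fun e : 'I_(j.*2).+1 * 'I_(j.*2).+1 =>
           (@labO m j f g hm e.1 + @labO m j f g hm e.2) %% m == a)
    (flatten [seq [:: (inord 0, inord k.*2.+1); (inord 0, inord k.*2.+2);
                   (inord k.*2.+1, inord k.*2.+2)] | k <- s])
  = cnt m (flatten [seq [:: f k; g k] | k <- s]) a + cnt m [seq f k + g k | k <- s] a.
Proof.
elim: s => [|k s IH] //= /andP[hk hs].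
have /= IH' := IH hs; rewrite IH' /cnt.
have i0 : 0 < (j.*2).+1 by [].
have i1 : k.*2.+1 < (j.*2).+1 by rewrite ltnS ltn_double.
have i2 : k.*2.+2 < (j.*2).+1 by rewrite ltnS -doubleS leq_double.
rewrite !inordK //.
rewrite /hlab /= odd_double /= ?half_odd2 ?uphalf_double mod0n !add0n !modn_mod.
rewrite modnDm -!addnA; do 2 congr (_ + _); exact: addnCA.

Qed.

Lemma fE_eq m j f g (hm : 0 < m) (a : 'I_m) :
  fE (friendship_edges j) (@labO m j f g hm) a = cnt m (VL j f g ++ SL j f g) a.
Proof.
rewrite /fE /friendship_edges fE_gen; last by apply/allP => k; rewrite mem_iota.
by rewrite /cnt count_cat.
Qed.

Lemma bridge m j f g (hm : 0 < m) :
  Bal m (0 :: VL j f g) -> Bal m (VL j f g ++ SL j f g) ->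
  Zm_cordial m (friendship_edges j).
Proof.
move=> hV hE; exists (@labO m j f g hm) => a1 a2; split.
  by rewrite !fV_eq; apply: hV.
by rewrite !fE_eq; apply: hE.
Qed.

Lemma cnt_cat m s1 s2 a : cnt m (s1 ++ s2) a = cnt m s1 a + cnt m s2 a.
Proof. by rewrite /cnt count_cat. Qed.

Lemma mod_window m lo x y : lo <= x < lo + m -> lo <= y < lo + m ->
  x %% m = y %% m -> x = y.
Proof.
wlog le_xy : x y / x <= y.
  move=> H hx hy e; case: (leqP x y) => h; first exact: H.
  by apply/esym/H => //; apply: ltnW.
move=> hx hy e.
have : m %| y - x by rewrite -eqn_mod_dvd // e.
case: (posnP (y - x)) => [h0|hpos]; first lia.
move/(dvdn_leq hpos); lia.
Qed.

Lemma cnt_le1 m s lo a : uniq s -> (forall x, x \in s -> lo <= x < lo + m) ->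
  cnt m s a <= 1.
Proof.
move=> us hb.
have -> : cnt m s a = count_mem a (map (modn^~ m) s) by rewrite /cnt count_map;
  apply: eq_count => x /=; rewrite eq_sym.
rewrite count_uniq_mem ?leq_b1 // map_inj_in_uniq // => x y hx hy.
exact: (mod_window (hb x hx) (hb y hy)).
Qed.

Lemma exists_window m lo a : 0 < m -> a < m ->
  exists2 x, lo <= x < lo + m & x %% m = a.
Proof.
move=> hm ha.
have hd := divn_eq lo m; have hr := ltn_pmod lo hm.
move: hd hr; set q := lo %/ m; set r := lo %% m => hd hr.
case: (leqP r a) => hra.
  exists (q * m + a); last by rewrite modnMDl modn_small.
  move: (q * m) hd => Q hd; lia.
exists (q.+1 * m + a); last by rewrite modnMDl modn_small.
rewrite mulSn; move: (q * m) hd => Q hd; lia.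
Qed.

Lemma cnt_ge1 m s lo a : 0 < m -> a < m ->
  (forall x, lo <= x < lo + m -> x \in s) -> 0 < cnt m s a.
Proof.
move=> hm ha hs; have [x hx hxa] := exists_window lo hm ha.
rewrite /cnt -has_count; apply/hasP; exists x; first exact: hs.
by rewrite hxa.
Qed.

Lemma bal_le1 m s : (forall a, a < m -> cnt m s a <= 1) -> Bal m s.
Proof. move=> h a1 a2 h1 h2; have := h a1 h1; lia. Qed.

Lemma bal_12 m s : (forall a, a < m -> 0 < cnt m s a <= 2) -> Bal m s.
Proof. move=> h a1 a2 h1 h2; have := h a1 h1; have := h a2 h2; lia. Qed.



Lemma memVL j f g x : x \in VL j f g -> exists2 k, k < j & (x = f k \/ x = g k).
Proof.
case/flattenP => s /mapP [k hk ->]; rewrite mem_iota in hk.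
rewrite !inE => /orP [/eqP -> | /eqP ->]; exists k => //; lia.
Qed.

Lemma memSL j f g x : x \in SL j f g -> exists2 k, k < j & x = f k + g k.
Proof. case/mapP => k hk ->; rewrite mem_iota in hk; exists k => //; lia. Qed.

Lemma size_VL j f g : size (VL j f g) = j.*2.
Proof. elim: j => [|j IH] //; by rewrite VLS size_cat IH /= doubleS addn2. Qed.

Lemma size_SL j f g : size (SL j f g) = j.
Proof. by rewrite size_map size_iota. Qed.

Lemma uniq_VL j f g :
  (forall k1 k2, k1 < j -> k2 < j -> f k1 = f k2 -> k1 = k2) ->
  (forall k1 k2, k1 < j -> k2 < j -> g k1 = g k2 -> k1 = k2) ->
  (forall k1 k2, k1 < j -> k2 < j -> f k1 <> g k2) ->
  uniq (VL j f g).
Proof.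
elim: j => [|j IH] // hf hg hfg.
rewrite VLS cat_uniq IH; first last.
- by move=> k1 k2 h1 h2; apply: hfg; lia.
- by move=> k1 k2 h1 h2; apply: hg; lia.
- by move=> k1 k2 h1 h2; apply: hf; lia.
rewrite /= andbT.
have nf : f j \notin VL j f g.
  apply/negP => /memVL [k hk [e|e]].
  - by have := hf j k (ltnSn _) (ltnW hk) e; lia.
  - by apply: (hfg j k (ltnSn _) (ltnW hk)).
have ng : g j \notin VL j f g.
  apply/negP => /memVL [k hk [e|e]].
  - by apply: (hfg k j (ltnW hk) (ltnSn _)).
  - by have := hg j k (ltnSn _) (ltnW hk) e; lia.
rewrite (negPf nf) (negPf ng) /= inE.
by apply/eqP; apply: hfg.
Qed.

Lemma uniq_SL j f g :
  (forall k1 k2, k1 < j -> k2 < j -> f k1 + g k1 = f k2 + g k2 -> k1 = k2) ->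
  uniq (SL j f g).
Proof.
move=> h; rewrite map_inj_in_uniq ?iota_uniq // => k1 k2.
rewrite !mem_iota => h1 h2; apply: h; lia.
Qed.

Lemma bnd_VL j f g lo hi :
  (forall k, k < j -> [/\ lo <= f k, f k < hi, lo <= g k & g k < hi]) ->
  forall x, x \in VL j f g -> lo <= x < hi.
Proof. move=> h x /memVL [k hk [->|->]]; have [? ? ? ?] := h k hk; lia. Qed.

Lemma bnd_SL j f g lo hi :
  (forall k, k < j -> lo <= f k + g k < hi) ->
  forall x, x \in SL j f g -> lo <= x < hi.
Proof. move=> h x /memSL [k hk ->]; exact: h. Qed.


Lemma cover_gen (s s2 : seq nat) : uniq s -> {subset s <= s2} -> size s2 <= size s ->
  forall x, x \in s2 -> x \in s.
Proof. by move=> us sub sz x; have [_ ->] := uniq_min_size us sub sz. Qed.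

Lemma cover_iota (s : seq nat) lo n : uniq s -> (forall x, x \in s -> lo <= x < lo + n) ->
  size s = n -> forall x, lo <= x < lo + n -> x \in s.
Proof.
move=> us hb sz x hx; apply: (@cover_gen s (iota lo n)) => //.
- by move=> y /hb hy; rewrite mem_iota.
- by rewrite size_iota sz.
- by rewrite mem_iota.
Qed.

Lemma vertA m j f g : 0 < m -> uniq (VL j f g) -> (forall x, x \in VL j f g -> 0 < x < m) ->
  Bal m (0 :: VL j f g).
Proof.
move=> hm u hb; apply: bal_le1 => a ha; apply: (@cnt_le1 m _ 0).
  rewrite /= u andbT; apply/negP => /hb; lia.
move=> x; rewrite inE => /orP [/eqP -> | /hb]; lia.
Qed.

Lemma vertB m j f g lo : 0 < m -> uniq (VL j f g) ->
  (forall x, x \in VL j f g -> lo <= x < lo + m) ->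
  (forall x, lo <= x < lo + m -> x \in VL j f g) ->
  Bal m (0 :: VL j f g).
Proof.
move=> hm u hb hc; apply: bal_12 => a ha.
have h1 := cnt_le1 a u hb; have h2 := cnt_ge1 hm ha hc.
rewrite /cnt /= -/(cnt m (VL j f g) a); case: (_ == a); lia.
Qed.

Lemma caseA m j f g lo : 0 < m ->
  uniq (VL j f g ++ SL j f g) ->
  (forall x, x \in VL j f g ++ SL j f g -> lo <= x < lo + m) ->
  (forall x, x \in VL j f g -> 0 < x < m) ->
  Zm_cordial m (friendship_edges j).
Proof.
move=> hm u hw hv; apply: (@bridge m j f g hm).
  have uv : uniq (VL j f g) by move: u; rewrite cat_uniq => /andP [].
  exact: vertA.
by apply: bal_le1 => a ha; apply: cnt_le1 u hw.
Qed.

Lemma caseA_sep m j f g lo mid hi : 0 < m ->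
  uniq (VL j f g) -> uniq (SL j f g) ->
  (forall x, x \in VL j f g -> lo <= x < mid) ->
  (forall x, x \in SL j f g -> mid <= x < hi) ->
  0 < lo -> lo <= mid -> hi <= lo + m -> mid <= m ->
  Zm_cordial m (friendship_edges j).
Proof.
move=> hm uv us bv bs h1 h0 h2 h3; apply: (@caseA m j f g lo) => //.
- rewrite cat_uniq uv us andbT /=; apply/hasPn => x /bs hx.
  by apply/negP => /bv; lia.
- by move=> x; rewrite mem_cat => /orP [/bv | /bs]; lia.
- by move=> x /bv; lia.
Qed.

Lemma caseB m j f g t lo2 : 0 < m ->
  uniq (VL j f g) -> uniq (SL j f g) ->
  (forall x, x \in VL j f g -> t < x <= t + j.*2) ->
  (forall x, x \in SL j f g -> lo2 <= x < lo2 + m) ->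
  (forall x, t + j.*2 < x <= t + m -> x \in SL j f g) ->
  j.*2 <= m ->
  (t + j.*2 < m \/ (t = 0 /\ j.*2 = m)) ->
  Zm_cordial m (friendship_edges j).
Proof.
move=> hm uv us bv bs cs hjm hvx.
have cv : forall x, t < x <= t + j.*2 -> x \in VL j f g.
  move=> x hx.
  apply: (@cover_iota (VL j f g) t.+1 j.*2 uv _ (size_VL _ _ _)).
    by move=> y /bv; lia.
  lia.
apply: (@bridge m j f g hm).
  case: hvx => [hlt | [ht hj]].
    by apply: vertA => // x /bv; lia.
  apply: (@vertB m j f g 1) => //.
    by move=> x /bv; lia.
  by move=> x hx; apply: cv; lia.
apply: bal_12 => a ha; rewrite cnt_cat.
have h1 : cnt m (VL j f g) a <= 1.
  by apply: (@cnt_le1 m _ t.+1) => // x /bv; lia.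
have h2 : cnt m (SL j f g) a <= 1 by apply: (@cnt_le1 m _ lo2).
have h3 : 0 < cnt m (VL j f g ++ SL j f g) a.
  apply: (@cnt_ge1 m _ t.+1) => // x hx; rewrite mem_cat.
  case: (leqP x (t + j.*2)) => hxj.
    by rewrite cv //; lia.
  by rewrite cs ?orbT //; lia.
move: h3; rewrite cnt_cat; lia.
Qed.


Definition fO (t k : nat) : nat := t + k.+1.
Definition gO (t p k : nat) : nat :=
  t + (if k <= p then 4 * p + 2 - 2 * k else 6 * p + 3 - 2 * k).

Lemma O_uV t p : uniq (VL p.*2.+1 (fO t) (gO t p)).
Proof.
apply: uniq_VL => k1 k2 h1 h2; rewrite /fO /gO; repeat case: ifP => ?; lia.
Qed.

Lemma O_uS t p : uniq (SL p.*2.+1 (fO t) (gO t p)).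
Proof.
apply: uniq_SL => k1 k2 h1 h2; rewrite /fO /gO; repeat case: ifP => ?; lia.
Qed.

Lemma O_bV t p x : x \in VL p.*2.+1 (fO t) (gO t p) -> t < x <= t + (p.*2.+1).*2.
Proof.
suff H : forall y, y \in VL p.*2.+1 (fO t) (gO t p) -> t.+1 <= y < (t + (p.*2.+1).*2).+1.
  by move=> /H; lia.
apply: bnd_VL => k hk; rewrite /fO /gO; split; (try case: ifP => ?); lia.
Qed.

Lemma O_bS t p x : x \in SL p.*2.+1 (fO t) (gO t p) ->
  2 * t + 3 * p + 3 <= x < 2 * t + 3 * p + 3 + p.*2.+1.
Proof.
move=> hx; apply: (@bnd_SL _ (fO t) (gO t p)) hx => k hk.
rewrite /fO /gO; case: ifP => ?; lia.
Qed.

Lemma O_caseA m p : p.*2.+1 * 3 <= m ->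
  Zm_cordial m (friendship_edges p.*2.+1).
Proof.
move=> hm.
apply: (@caseA_sep m _ (fO p) (gO p p) p.+1 (5 * p + 3) (7 * p + 4)); try lia.
- exact: O_uV.
- exact: O_uS.
- by move=> x /O_bV; lia.
- by move=> x /O_bS; lia.
Qed.

Lemma O_caseB m p : (p.*2.+1).*2 < m -> m < p.*2.+1 * 3 ->
  Zm_cordial m (friendship_edges p.*2.+1).
Proof.
move=> h1 h2; set t := m - (5 * p + 2).
have hS : forall x, x \in SL p.*2.+1 (fO t) (gO t p) ->
    2 * t + 3 * p + 3 <= x < 2 * t + 3 * p + 3 + p.*2.+1 by move=> x /O_bS.
apply: (@caseB m _ (fO t) (gO t p) t (2 * t + 3 * p + 3)); try lia.
- exact: O_uV.
- exact: O_uS.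
- exact: O_bV.
- by move=> x /hS; lia.
- move=> x hx; apply: (@cover_iota _ (2 * t + 3 * p + 3) p.*2.+1) => //.
  + exact: O_uS.
  + by rewrite size_SL.
  + lia.
Qed.


Definition fH (t p k : nat) : nat :=
  t + (if k < p then k.+1 else if k < p.*2 - 1 then k + 3 else p + 2).
Definition gH (t p k : nat) : nat :=
  t + (if k < p then 4 * p + 1 - 2 * k else if k < p.*2 - 1 then 6 * p - 2 - 2 * k else 4 * p).

Lemma H_caseA m p : 0 < p -> p.*2 * 3 < m -> Zm_cordial m (friendship_edges p.*2).
Proof.
move=> hp hm; set t := p - 1.
apply: (@caseA_sep m _ (fH t p) (gH t p) p (5 * p + 1) (7 * p + 1)); try lia.
- apply: uniq_VL => k1 k2 h1 h2; rewrite /fH /gH; repeat case: ifP => ?; lia.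
- apply: uniq_SL => k1 k2 h1 h2; rewrite /fH /gH; repeat case: ifP => ?; lia.
- suff H : forall y, y \in VL p.*2 (fH t p) (gH t p) -> p <= y < 5 * p + 1 by [].
  apply: bnd_VL => k hk; rewrite /fH /gH; split; repeat case: ifP => ?; lia.
- apply: bnd_SL => k hk; rewrite /fH /gH; repeat case: ifP => ?; lia.
Qed.

Definition fX (t k : nat) : nat := t + k.+1.
Definition gX (t p k : nat) : nat :=
  t + (if k < p then 4 * p - 1 - 2 * k else if k < p.*2 - 1 then 6 * p - 2 - 2 * k else 4 * p).

Lemma X_caseB m p : 0 < p -> p.*2.*2 <= m -> m < p.*2 * 3 ->
  (p.*2.*2 < m -> 1 < p) -> Zm_cordial m (friendship_edges p.*2).
Proof.
move=> hp h1 h2 h3; set t := m + 1 - 5 * p.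
have uS : uniq (SL p.*2 (fX t) (gX t p)).
  apply: uniq_SL => k1 k2 k1j k2j; rewrite /fX /gX; repeat case: ifP => ?; lia.
have bS : forall x, x \in SL p.*2 (fX t) (gX t p) ->
    (2 * t + 3 * p + 1 <= x < 2 * t + 5 * p) \/ x = 2 * t + 6 * p.
  move=> x /memSL [k hk ->]; rewrite /fX /gX; repeat case: ifP => ?; lia.
apply: (@caseB m _ (fX t) (gX t p) t (2 * t + 3 * p + 1)); try lia.
- apply: uniq_VL => k1 k2 k1j k2j; rewrite /fX /gX; repeat case: ifP => ?; lia.
- suff H : forall y, y \in VL p.*2 (fX t) (gX t p) -> t.+1 <= y < (t + p.*2.*2).+1.
    by move=> y /H; lia.
  apply: bnd_VL => k hk; rewrite /fX /gX; split; repeat case: ifP => ?; lia.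
- by move=> x /bS; lia.
- move=> x hx.
  apply: (@cover_gen _ (iota (2 * t + 3 * p + 1) (p.*2 - 1) ++ [:: 2 * t + 6 * p])) => //.
  + move=> y /bS hy; rewrite mem_cat mem_iota inE.
    case: hy => [hy | ->]; last by rewrite eqxx orbT.
    apply/orP; left; lia.
  + rewrite size_cat size_iota size_SL /=; lia.
  + rewrite mem_cat mem_iota; apply/orP; left; lia.
Qed.


Definition fS (s k : nat) : nat :=
  if k < 2 * s then 4 * s - 2 * k
  else if k < 3 * s - 1 then 8 * s - (2 * k + 3)
  else if k < 4 * s - 3 then 8 * s - (2 * k + 5)
  else if k < 4 * s - 2 then 1
  else if k < 4 * s - 1 then 2 * s - 1
  else 4 * s - 1.
Definition gS (s k : nat) : nat :=
  if k < 2 * s then 8 * s + k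
  else if k < 3 * s - 1 then k + 2 * s + 1
  else if k < 4 * s - 3 then k + 2 * s + 3
  else if k < 4 * s - 2 then 5 * s
  else if k < 4 * s - 1 then 6 * s
  else 6 * s + 1.

Lemma S_case s : 1 < s -> Zm_cordial (12 * s) (friendship_edges (4 * s)).
Proof.
move=> hs.
have bV : forall x, x \in VL (4 * s) (fS s) (gS s) -> 0 < x < 12 * s.
  apply: bnd_VL => k hk; rewrite /fS /gS; split; repeat case: ifP => ?; lia.
have bS : forall x, x \in SL (4 * s) (fS s) (gS s) -> 0 < x < (12 * s).+1.
  apply: bnd_SL => k hk; rewrite /fS /gS; repeat case: ifP => ?; lia.
apply: (@caseA (12 * s) (4 * s) (fS s) (gS s) 1) => //; first lia.
- rewrite cat_uniq; apply/and3P; split.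
  + apply: uniq_VL => k1 k2 h1 h2; rewrite /fS /gS; repeat case: ifP => ?; lia.
  + apply/hasPn => x /memSL [k hk ->]; apply/negP => /memVL [k' hk' [e|e]];
      move: e; rewrite /fS /gS; repeat case: ifP => ?; lia.
  + apply: uniq_SL => k1 k2 h1 h2; rewrite /fS /gS; repeat case: ifP => ?; lia.
- by move=> x; rewrite mem_cat => /orP [/bV | /bS]; lia.
Qed.


Lemma Bal_check m s :
  all (fun a1 => all (fun a2 => cnt m s a1 <= cnt m s a2 + 1) (iota 0 m)) (iota 0 m) ->
  Bal m s.
Proof.
move=> /allP h a1 a2 h1 h2.
have ha1 : a1 \in iota 0 m by rewrite mem_iota.
have /allP := h a1 ha1.
by apply; rewrite mem_iota.
Qed.

Lemma special5 : Zm_cordial 5 (friendship_edges 2).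
Proof.
apply: (@bridge 5 2 (fun k => if k == 0 then 1 else 2) (fun k => if k == 0 then 4 else 3)) => //;
  by apply: Bal_check.
Qed.

Lemma special12 : Zm_cordial 12 (friendship_edges 4).
Proof.
apply: (@bridge 12 4 (fun k => nth 0 [:: 1; 3; 4; 2] k) (fun k => nth 0 [:: 5; 7; 8; 9] k)) => //;
  by apply: Bal_check.
Qed.

Lemma trivial0 m : 0 < m -> Zm_cordial m (friendship_edges 0).
Proof.
move=> hm; apply: (@caseA m 0 (fun _ => 0) (fun _ => 0) 0) => //.
Qed.

Lemma master m j : 0 < m -> (j.*2 < m \/ (j.*2 = m /\ ~~ odd j)) ->
  ~ (m = 3 * j /\ j %% 4 = 2) -> Zm_cordial m (friendship_edges j).
Proof.
move=> hm hj h3.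
case: (posnP j) => [-> | jpos]; first exact: trivial0.
have hd := odd_double_half j.
case ho : (odd j) hd hj => /= hd hj.
-
  set p := j./2 in hd; rewrite -hd add1n.
  have hj' : (p.*2.+1).*2 < m by case: hj => [h | [_ h]] //; lia.
  case: (leqP (p.*2.+1 * 3) m) => hc.
    exact: O_caseA.
  exact: O_caseB.
-
  set p := j./2 in hd; rewrite add0n in hd; rewrite -hd.
  have pp : 0 < p by lia.
  case: (ltnP (p.*2 * 3) m) => hc.
    exact: H_caseA.
  case: (leqP m (p.*2 * 3)) => hc'; last by lia.
  case: (ltnP m (p.*2 * 3)) => hc''.
  + have hm5 : m != 5 \/ m = 5 by case: (m =P 5); [right | left].
    case: hm5 => [/eqP hm5 | hm5].
      apply: X_caseB => //; try lia.
    have -> : p = 1 by case: hj => [h | [h _]]; lia.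
    by rewrite hm5; exact: special5.
  + have hmj : m = p.*2 * 3 by lia.
    have h4 : j %% 4 = 0.
      move: h3; have := ltn_pmod j (isT : 0 < 4); have := divn_eq j 4.
      move: (j %/ 4) (j %% 4) => q r e hr h3.
      case: (r =P 0) => // hr0; case: h3; split; lia.
    have := divn_eq j 4; rewrite h4 addn0 => ej.
    set s := j %/ 4 in ej.
    have hs : 0 < s by lia.
    case: (ltnP 1 s) => hs1.
      have -> : m = 12 * s by lia.
      have -> : p.*2 = 4 * s by lia.
      exact: S_case.
    have s1 : s = 1 by lia.
    have -> : m = 12 by lia.
    have -> : p.*2 = 4 by lia.
    exact: special12.
Qed.


Lemma notin_list r : ~ (r \in [:: 2; 4; 6; 8; 10]) ->
  [/\ r <> 2, r <> 4, r <> 6, r <> 8 & r <> 10].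
Proof. by move=> h; split => e; apply: h; rewrite e. Qed.

Unset Implicit Arguments.

Theorem theorem10p1 (m : nat) (hm : 1 <= m) :
  (~ (m %% 12 \in [:: 2; 4; 6; 8; 10]) ->
     forall j : nat, j <= m./2 -> Zm_cordial m (friendship_edges j)) /\
  (m %% 12 = 2 ->
     forall j : nat, j <= m./2 - 1 -> Zm_cordial m (friendship_edges j)).
Proof.
have hdm := divn_eq m 12; have hr := ltn_pmod m (isT : 0 < 12).
have hodd := odd_double_half m.
have hh1 : (m./2).*2 <= m by rewrite -{2}hodd leq_addl.
have hh2 : m <= (m./2).*2 + 1 by rewrite -{1}hodd addnC leq_add2l leq_b1.
have hj4 := fun j => divn_eq j 4.
have hj4r := fun j => ltn_pmod j (isT : 0 < 4).
split.
- move=> /notin_list [n2 n4 n6 n8 n10] j hjm; apply: master => //.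
  + have hj2 : j.*2 <= (m./2).*2 by rewrite leq_double.
    case: (ltnP (j.*2) m) => hlt; [by left | right].
    split; first lia.
    have hoj := odd_double_half j.
    case ho : (odd j) hoj => //= hoj.
    move: hdm hr hoj hlt hj2 hh1; move: (m %/ 12) (m %% 12) (j./2) => q r v.
    lia.
  + case=> e1 e2; have := hj4 j; have := hj4r j; rewrite e2.
    move: hdm hr; move: (m %/ 12) (m %% 12) (j %/ 4) => q r u.
    lia.
- move=> hr2 j hj; apply: master => //.
  + left; move: hdm hr hh1 hh2 hj; rewrite hr2; move: (m %/ 12) (m./2) => q h.
    lia.
  + case=> e1 e2; move: hdm; rewrite hr2; move: (m %/ 12) => q; lia.
Qed.
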